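(* Let $V$ be a finite alphabet of tokens containing an end-of-sequence token, $x$ a prompt, and $p^{(1)},p^{(2)}$ two language models. Let $p$ be the fused model defined iteratively by $$p(\cdot\mid y_{<t},x)=\arg\min_{p^*}\max_{i\in\{1,2\}}\ \mathbb{E}_{y_t\sim p^*}\log\frac{p^*(y_t)\,p(y_{<t}\mid x)}{p^{(i)}(y_{\le t}\mid x)},$$ where $p^*$ ranges over probability distributions on $V$ and $p(y_{<t}\mid x)=\prod_{s<t}p(y_s\mid y_{<s},x)$. Let $y_{<t}$ be any non-ending sequence (containing no end-of-sequence token), and assume that $p^{(i)}(\cdot\mid y_{<t},x)$ has full support on $V$ for both $i\in\{1,2\}$ and that $p^{(1)}(y_{<t}\mid x)>p^{(2)}(y_{<t}\mid x)$. Then at least one of the following holds: 1. $\mathbb{E}_{y_t\sim p(\cdot\mid y_{<t},x)}\log p^{(1)}(y_{\le t}\mid x)=\mathbb{E}_{y_t\sim p(\cdot\mid y_{<t},x)}\log p^{(2)}(y_{\le t}\mid x)$; 2. $p(y_t\mid y_{<t},x)=p^{(2)}(y_t\mid y_{<t},x)$ for all $y_t\in V$.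
   Context: A language model $p$ maps a prompt $x$ to a distribution over token sequences $y_{0:T}$ over a finite alphabet $V$ (with $y_T$ the end-of-sequence token), factorized as $p(y_{0:T}\mid x)=\prod_{t=0}^T p(y_t\mid y_{<t},x)$ with $y_{<0}=\emptyset$; for a prefix, $p^{(i)}(y_{\le t}\mid x)=\prod_{s\le t}p^{(i)}(y_s\mid y_{<s},x)$. The minimization defining $p(\cdot\mid y_{<t},x)$ is equivalent to minimizing $s$ over $(p^*,s)$ subject to $\mathrm{KL}(p^*\|p^{(i)}(\cdot\mid y_{<t},x))+\log\frac{p(y_{<t}\mid x)}{p^{(i)}(y_{<t}\mid x)}\le s$ for $i=1,2$, where $\mathrm{KL}$ is the Kullback–Leibler divergence. *)

(* Defs.v *)
From HB Require Import structures.
From mathcomp Require Import all_boot all_order all_algebra.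
From mathcomp Require Import all_classical all_reals all_analysis.
Set Implicit Arguments. Unset Strict Implicit. Unset Printing Implicit Defensive.
Import Order.TTheory GRing.Theory Num.Theory.
Local Open Scope ring_scope.

Section LM.
Variables (R : realType) (V : finType) (X : Type).

(* A (conditional) language model: p x s v = p(v | s, x). *)
Definition model := X -> seq V -> V -> R.

Definition is_dist (q : V -> R) : Prop :=
  (forall v, 0 <= q v) /\ \sum_(v : V) q v = 1.

Definition nonending (eos : V) (s : seq V) : bool := eos \notin s.

Definition is_LM (eos : V) (p : model) : Prop :=
  forall x s, nonending eos s -> is_dist (p x s).

Definition pref (eos : V) (p : model) (x : X) (s : seq V) : R :=
  \prod_(i < size s) p x (take i s) (nth eos s i).

Definition fuse_obj (eos : V) (p pi : model) (x : X) (s : seq V)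
    (pstar : V -> R) : R :=
  \sum_(v : V) pstar v *
     ln (pstar v * pref eos p x s / pref eos pi x (rcons s v)).

Definition fuse_max (eos : V) (p p1 p2 : model) (x : X) (s : seq V)
    (pstar : V -> R) : R :=
  Num.max (fuse_obj eos p p1 x s pstar) (fuse_obj eos p p2 x s pstar).

Definition is_fused (eos : V) (p1 p2 p : model) (x : X) : Prop :=
  forall s, nonending eos s ->
    is_dist (p x s) /\
    forall pstar, is_dist pstar ->
      fuse_max eos p p1 p2 x s (p x s) <= fuse_max eos p p1 p2 x s pstar.

End LM.

(* Main.v *)
Require Import Defs.
From HB Require Import structures.
From mathcomp Require Import all_boot all_order all_algebra.
From mathcomp Require Import all_classical all_reals all_analysis.
From mathcomp Require Import ring lra.
Import Order.TTheory GRing.Theory Num.Theory.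
Local Open Scope ring_scope.

Section Aux.
Context {R : realType}.

Definition hh (x z : R) := x * ln x - x * ln z - x + z.

Lemma hh_ge0 x z : 0 <= x -> 0 < z -> 0 <= hh x z.
Proof.
rewrite /hh le_eqVlt => /orP[/eqP<-|x0] z0; first by rewrite !mul0r; lra.
have := expR_ge1Dx (ln (z / x)).
rewrite lnK ?posrE ?divr_gt0 // ln_div ?posrE // => H.
have : x * (1 + (ln z - ln x)) <= x * (z / x) by rewrite ler_pM2l.
rewrite mulrCA divff ?mulr1 ?gt_eqF //; lra.
Qed.

Lemma hh_eq0 x z : 0 <= x -> 0 < z -> hh x z = 0 -> x = z.
Proof.
rewrite /hh le_eqVlt => /orP[/eqP<-|x0] z0; first by rewrite !mul0r; lra.
move=> H; apply/eqP; apply/negPn/negP => nxz.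
have ne : ln (z / x) != 0.
  rewrite ln_eq0 ?divr_gt0 //; apply/negP => /eqP e.
  have : z = z / x * x by rewrite divfK ?gt_eqF.
  by rewrite e mul1r => zx; move: nxz; rewrite zx eqxx.
have := expR_gt1Dx ne.
rewrite lnK ?posrE ?divr_gt0 // ln_div ?posrE // => H2.
have : x * (1 + (ln z - ln x)) < x * (z / x) by rewrite ltr_pM2l.
rewrite mulrCA divff ?mulr1 ?gt_eqF //; lra.
Qed.

Lemma phi_convex {x y t : R} : 0 <= x -> 0 <= y -> 0 <= t <= 1 ->
  ((1 - t) * x + t * y) * ln ((1 - t) * x + t * y)
   <= (1 - t) * (x * ln x) + t * (y * ln y).
Proof.
move=> x0 y0 /andP[t0 t1].
have a0 : 0 <= (1 - t) * x by apply: mulr_ge0 => //; lra.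
have b0 : 0 <= t * y by apply: mulr_ge0.
set z := (1 - t) * x + t * y.
have : 0 <= z by rewrite /z; lra.
rewrite le_eqVlt => /orP[/eqP z0|zp].
  have a00 : (1 - t) * x = 0 by rewrite /z in z0; lra.
  have b00 : t * y = 0 by rewrite /z in z0; lra.
  by rewrite -z0 mul0r !mulrA a00 b00 !mul0r addr0.
have h1 : 0 <= (1 - t) * hh x z by apply: mulr_ge0; [lra | exact: hh_ge0].
have h2 : 0 <= t * hh y z by apply: mulr_ge0; [lra | exact: hh_ge0].
rewrite /hh in h1 h2.
have -> : z * ln z = ((1 - t) * x) * ln z + (t * y) * ln z by rewrite -mulrDl.
have e : z = (1 - t) * x + t * y by [].
nra.
Qed.

Lemma escape (u1 u2 w1 w2 : R) : u2 < u1 -> w1 < u1 ->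
  exists t, [/\ 0 < t, t <= 1, (1 - t) * u1 + t * w1 < u1 &
                (1 - t) * u2 + t * w2 < u1].
Proof.
move=> h12 hw.
set d := u1 - u2; set g := w2 - u2.
have d0 : 0 < d by rewrite /d; lra.
have D0 : 0 < d + `|g| by have := normr_ge0 g; lra.
exists (d / (d + `|g|)); split.
- by rewrite divr_gt0.
- by rewrite ler_pdivrMr // mul1r; have := normr_ge0 g; lra.
- have t0 : 0 < d / (d + `|g|) by rewrite divr_gt0.
  have : 0 < d / (d + `|g|) * (u1 - w1) by apply: mulr_gt0; lra.
  lra.
- have t0 : 0 < d / (d + `|g|) by rewrite divr_gt0.
  have hg : d / (d + `|g|) * g <= d / (d + `|g|) * `|g|.
    by rewrite ler_pM2l // ler_norm.
  have : d / (d + `|g|) * `|g| < d.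
    rewrite mulrAC ltr_pdivrMr // ltr_pM2l //; lra.
  rewrite /g /d in hg * => H; lra.
Qed.

Definition mix {V : finType} (q r : V -> R) (t : R) := fun v => (1 - t) * q v + t * r v.

Lemma mix_dist {V : finType} {q r : V -> R} {t : R} : is_dist q -> is_dist r -> 0 <= t <= 1 ->
  is_dist (mix q r t).
Proof.
move=> [q0 q1] [r0 r1] /andP[t0 t1]; split.
  move=> v; rewrite /mix; apply: addr_ge0; apply: mulr_ge0 => //; lra.
by rewrite /mix big_split /= -!mulr_sumr q1 r1; lra.
Qed.

Lemma escape_contra {V : finType} (F G : (V -> R) -> R) p r :
  is_dist p -> is_dist r ->
  (forall t, 0 <= t <= 1 -> F (mix p r t) <= (1 - t) * F p + t * F r) ->
  (forall t, 0 <= t <= 1 -> G (mix p r t) <= (1 - t) * G p + t * G r) ->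
  (forall q, is_dist q -> Num.max (F p) (G p) <= Num.max (F q) (G q)) ->
  G p < F p -> F r < F p -> False.
Proof.
move=> dp dr cF cG mn hGF hFr.
have [t [t0 t1 h1 h2]] := @escape (F p) (G p) (F r) (G r) hGF hFr.
have tt : 0 <= t <= 1 by apply/andP; split => //; apply: ltW.
have := mn _ (mix_dist dp dr tt).
have -> : Num.max (F p) (G p) = F p by rewrite max_l // ltW.
have e1 := cF t tt; have e2 := cG t tt.
have : Num.max (F (mix p r t)) (G (mix p r t)) < F p.
  by rewrite gt_max; apply/andP; split; lra.
move=> H1 H2; have := lt_le_trans H1 H2; by rewrite ltxx.
Qed.

Definition KL {V : finType} (q c : V -> R) := \sum_(v : V) hh (q v) (c v).

Lemma KL_ge0 {V : finType} (q c : V -> R) : (forall v, 0 <= q v) -> (forall v, 0 < c v) ->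
  0 <= KL q c.
Proof. by move=> q0 c0; apply: sumr_ge0 => v _; apply: hh_ge0. Qed.

Lemma KL_self {V : finType} (c : V -> R) : KL c c = 0.
Proof. by apply: big1 => v _; rewrite /hh; lra. Qed.

Lemma KL_conv {V : finType} (q r c : V -> R) t : (forall v, 0 <= q v) -> (forall v, 0 <= r v) ->
  0 <= t <= 1 -> KL (mix q r t) c <= (1 - t) * KL q c + t * KL r c.
Proof.
move=> q0 r0 tt; rewrite /KL !mulr_sumr -big_split /=.
apply: ler_sum => v _; rewrite /hh /mix.
have := phi_convex (q0 v) (r0 v) tt.
move: tt => /andP[t0 t1].
set z := (1 - t) * q v + t * r v => H.
have -> : z * ln (c v) = (1 - t) * (q v * ln (c v)) + t * (r v * ln (c v))
  by rewrite /z; ring.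
rewrite /z in H *; lra.
Qed.

End Aux.

Lemma pref_rcons (R : realType) {V : finType} (X : Type) (eos : V) (p : model R V X) x s v :
  pref eos p x (rcons s v) = pref eos p x s * p x s v.
Proof.
rewrite /pref size_rcons big_ord_recr /=; congr (_ * _).
  apply: eq_bigr => i _.
  by rewrite -cats1 take_cat nth_cat ltn_ord.
by rewrite -cats1 take_cat ltnn subnn take0 cats0 nth_cat ltnn subnn.
Qed.

Lemma obj_term (R : realType) (q P w : R) : 0 <= q -> 0 < P -> 0 < w ->
  q * ln (q * P / w) = q * ln q + q * ln P - q * ln w.
Proof.
rewrite le_eqVlt => /orP[/eqP<-|q0] P0 w0; first by rewrite !mul0r; lra.
by rewrite ln_div ?lnM ?posrE ?mulr_gt0 //; ring.
Qed.

Theorem lemma4p2 (R : realType) (V : finType) (X : Type) (eos : V)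
    (p1 p2 p : model R V X) (x : X) (s : seq V) :
  is_LM eos p1 -> is_LM eos p2 ->
  is_fused eos p1 p2 p x ->
  nonending eos s ->
  (forall v, 0 < p1 x s v) -> (forall v, 0 < p2 x s v) ->
  pref eos p2 x s < pref eos p1 x s ->
  0 < pref eos p2 x s -> 0 < pref eos p x s ->
  (\sum_(v : V) p x s v * ln (pref eos p1 x (rcons s v)) =
   \sum_(v : V) p x s v * ln (pref eos p2 x (rcons s v)))
  \/ (forall v, p x s v = p2 x s v).
Proof.
move=> L1 L2 Fu ns a0 b0 BA B0 P0.
have A0 : 0 < pref eos p1 x s by apply: lt_trans BA.
have da := L1 x s ns; have db := L2 x s ns.
have [dp mn] := Fu s ns.
set P := pref eos p x s.
have fE : forall pi : model R V X, (forall v, 0 < pi x s v) -> 0 < pref eos pi x s ->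
   forall q, is_dist q ->
   fuse_obj eos p pi x s q = \sum_v (q v * ln (q v) + q v * ln P)
                             - \sum_v q v * ln (pref eos pi x (rcons s v)).
  move=> pi pi0 Pi0 q [q0 q1]; rewrite /fuse_obj -sumrB.
  apply: eq_bigr => v _; rewrite obj_term //.
  by rewrite pref_rcons mulr_gt0.
have fK : forall pi : model R V X, (forall v, 0 < pi x s v) -> 0 < pref eos pi x s ->
   is_dist (pi x s) -> forall q, is_dist q ->
   fuse_obj eos p pi x s q = KL q (pi x s) + (ln P - ln (pref eos pi x s)).
  move=> pi pi0 Pi0 [_ dpi] q dq; rewrite (fE pi pi0 Pi0 q dq) -sumrB.
  case: dq => q0 q1.
  have -> : ln P - ln (pref eos pi x s) = \sum_v q v * (ln P - ln (pref eos pi x s))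
     + \sum_v (q v - pi x s v).
    by rewrite -mulr_suml q1 sumrB q1 dpi; ring.
  rewrite /KL -!big_split /=; apply: eq_bigr => v _.
  rewrite pref_rcons lnM ?posrE // /hh; ring.
set f1 := fuse_obj eos p p1 x s; set f2 := fuse_obj eos p p2 x s.
have K1 : forall q, is_dist q -> f1 q = KL q (p1 x s) + (ln P - ln (pref eos p1 x s))
  := fK p1 a0 A0 da.
have K2 : forall q, is_dist q -> f2 q = KL q (p2 x s) + (ln P - ln (pref eos p2 x s))
  := fK p2 b0 B0 db.
have lAB : ln (pref eos p2 x s) < ln (pref eos p1 x s) by rewrite ltr_ln ?posrE.
have conv : forall (f : (V -> R) -> R) (c : V -> R) C, (forall v, 0 < c v) ->
   (forall q, is_dist q -> f q = KL q c + C) ->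
   forall q r, is_dist q -> is_dist r -> forall t, 0 <= t <= 1 ->
   f (mix q r t) <= (1 - t) * f q + t * f r.
  move=> f c C c0 fq q r dq dr t tt.
  rewrite (fq _ (mix_dist dq dr tt)) (fq _ dq) (fq _ dr).
  have := @KL_conv _ _ q r c t dq.1 dr.1 tt; lra.
have c1 := conv f1 (p1 x s) _ a0 K1.
have c2 := conv f2 (p2 x s) _ b0 K2.
case: (ltgtP (f1 (p x s)) (f2 (p x s))) => h.
-
  right.
  have Kz : KL (p x s) (p2 x s) <= 0.
    rewrite leNgt; apply/negP => Kp.
    apply: (@escape_contra R V f2 f1 (p x s) (p2 x s) dp db).
    + exact: c2.
    + exact: c1.
    + by move=> q dq; rewrite maxC [X in _ <= X]maxC; apply: mn.
    + exact: h.
    + by rewrite (K2 _ dp) (K2 _ db) KL_self; lra.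
  have Ke : KL (p x s) (p2 x s) = 0 by apply/eqP; rewrite eq_le Kz KL_ge0 //; case: dp.
  move: Ke; rewrite /KL => /eqP; rewrite psumr_eq0 => [/allP Hall v|v _].
    apply: hh_eq0 => //; first by case: dp.
    by apply/eqP; apply: (Hall v); rewrite mem_index_enum.
  by apply: hh_ge0 => //; case: dp.
-
  exfalso.
  apply: (@escape_contra R V f1 f2 (p x s) (p1 x s) dp da).
  + exact: c1.
  + exact: c2.
  + by move=> q dq; apply: mn.
  + exact: h.
  + rewrite (K1 _ da) KL_self.
    have := K2 _ dp; have := @KL_ge0 _ _ (p x s) _ dp.1 b0; lra.
- left.
  move: h; rewrite /f1 /f2 (fE p1 a0 A0 _ dp) (fE p2 b0 B0 _ dp) => /addrI/oppr_inj ->; done.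
Qed.
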